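(* Let $R\in C^1(\mathbb{R}^3;SO(3))$ be such that $\operatorname{curl}R=\alpha$ on $\mathbb{R}^3$ for some constant $\alpha\in\mathbb{R}^{3\times3}$. Then $\alpha=0$ and $R$ is constant.
   Context: $SO(3)$ is the group of $3\times3$ rotation matrices. For a matrix field $R$, $\operatorname{curl}$ is applied row-wise: $(\operatorname{curl}R)_{ij}=\varepsilon_{jkl}\partial_kR_{il}$ (Einstein summation, $\varepsilon_{jkl}$ the sign of the permutation $(jkl)$). *)

(* Defs.v *)
From HB Require Import structures.
From mathcomp Require Import all_boot all_order all_algebra.
From mathcomp Require Import all_classical all_reals all_analysis.
Set Implicit Arguments. Unset Strict Implicit. Unset Printing Implicit Defensive.
Import Order.TTheory GRing.Theory Num.Theory.
Import numFieldNormedType.Exports.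
Local Open Scope ring_scope.

(* The space R^3 is modelled as row vectors 'rV[R]_3; e_k = delta_mx 0 k. *)

Definition eps (j k l : 'I_3) : int :=
  match nat_of_ord j, nat_of_ord k, nat_of_ord l with
  | 0, 1, 2 | 1, 2, 0 | 2, 0, 1 => 1%:Z
  | 0, 2, 1 | 2, 1, 0 | 1, 0, 2 => - 1%:Z
  | _, _, _ => 0%:Z
  end.

Definition partial {R : realType} (k : 'I_3) (f : 'rV[R]_3 -> R) (x : 'rV[R]_3) : R :=
  'D_(delta_mx 0 k) f x.

Definition entry {R : realType} (Q : 'rV[R]_3 -> 'M[R]_3) (i j : 'I_3) : 'rV[R]_3 -> R :=
  fun x => Q x i j.

Definition C1 {R : realType} (Q : 'rV[R]_3 -> 'M[R]_3) : Prop :=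
  forall i j : 'I_3,
    (forall x, differentiable (entry Q i j) x) /\
    (forall k : 'I_3, continuous (partial k (entry Q i j))).

Definition SO3 {R : realType} (M : 'M[R]_3) : Prop :=
  M^T *m M = 1%:M /\ \det M = 1.

Definition curl {R : realType} (Q : 'rV[R]_3 -> 'M[R]_3) (x : 'rV[R]_3) : 'M[R]_3 :=
  \matrix_(i < 3, j < 3)
     \sum_(k < 3) \sum_(l < 3) (eps j k l)%:~R * partial k (entry Q i l) x.

(* Main.v *)
Require Import Defs.
From HB Require Import structures.
From mathcomp Require Import all_boot all_order all_algebra.
From mathcomp Require Import all_classical all_reals all_analysis.
From mathcomp Require Import ring lra.
Set Implicit Arguments. Unset Strict Implicit. Unset Printing Implicit Defensive.
Import Order.TTheory GRing.Theory Num.Theory.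
Import numFieldNormedType.Exports.
Local Open Scope ring_scope.
Local Open Scope classical_set_scope.
Local Open Scope ring_scope.
Section S.
Context {R : realType}.

Lemma line_is_derive (f : 'rV[R]_3 -> R) (a v : 'rV[R]_3) (t : R) :
  derivable f (a + t *: v) v ->
  is_derive t 1 (fun s => f (a + s *: v)) ('D_v f (a + t *: v)).
Proof.
move=> df.
have E : (fun h : R => h^-1 *: (((fun s => f (a + s *: v)) \o shift t) (h *: 1) - (fun s => f (a + s *: v)) t)) =
  (fun h => h^-1 *: ((f \o shift (a + t *: v)) (h *: v) - f (a + t *: v))).
  apply/funext => h /=. congr (_ *: (f _ - _)).
  by rewrite /shift /= scalerDl [_%:A]mulr1 addrCA addrA.
split; first by rewrite /derivable E.
by rewrite /derive E.
Qed.

Lemma shift_const (f : 'rV[R]_3 -> R) (k : 'I_3) (a : 'rV[R]_3) (s : R) :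
  (forall x, differentiable f x) -> (forall x, partial k f x = 0) ->
  f (a + s *: delta_mx 0 k) = f a.
Proof.
move=> df p0.
have H : forall t : R, is_derive t (1:R) (fun s : R => f (a + s *: delta_mx 0 k)) 0.
  move=> t; have := @line_is_derive f a (delta_mx 0 k) t (diff_derivable (df _)).
  by have := p0 (a + t *: delta_mx 0 k); rewrite /partial => ->.
have := is_derive_0_is_cst s 0 H.
by rewrite scale0r addr0.
Qed.

Lemma rv3_decomp (x y : 'rV[R]_3) :
  y = x + (y 0 0 - x 0 0) *: delta_mx 0 0 + (y 0 1 - x 0 1) *: delta_mx 0 1
        + (y 0 2 - x 0 2) *: delta_mx 0 2.
Proof.
apply/rowP => j; rewrite !mxE /=.
case: j => [[|[|[|//]]] Hj] /=; rewrite !(mulr1, mulr0, addr0).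
- rewrite (_ : Ordinal Hj = 0); last exact: val_inj.
  by rewrite addrC subrK.
- rewrite (_ : Ordinal Hj = 1); last exact: val_inj.
  by rewrite addrC subrK.
- rewrite (_ : Ordinal Hj = 2); last exact: val_inj.
  by rewrite addrC subrK.
Qed.

Lemma const_of_partials (f : 'rV[R]_3 -> R) :
  (forall x, differentiable f x) -> (forall k x, partial k f x = 0) ->
  forall x y, f y = f x.
Proof.
move=> df p0 x y.
by rewrite (rv3_decomp x y) !shift_const.
Qed.

Lemma orth_deriv (Q : 'rV[R]_3 -> 'M[R]_3)
  (hd : forall i j x, differentiable (entry Q i j) x)
  (hSO : forall x, (Q x)^T *m Q x = 1%:M) (k : 'I_3) (x : 'rV[R]_3) (l m : 'I_3) :
  \sum_(i < 3) (Q x i l * partial k (entry Q i m) x + Q x i m * partial k (entry Q i l) x) = 0.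
Proof.
pose h := fun i : 'I_3 => (entry Q i l * entry Q i m : 'rV[R]_3 -> R).
have H : is_derive x (delta_mx 0 k : 'rV[R]_3) (\sum_(i < 3) h i)
   (\sum_(i < 3) (Q x i l * partial k (entry Q i m) x + Q x i m * partial k (entry Q i l) x)).
  apply: is_derive_sum => i; apply: is_deriveM; exact/derivableP/diff_derivable.
have E : \sum_(i < 3) h i = cst ((1%:M : 'M[R]_3) l m).
  rewrite fct_sumE; apply/funext => y; rewrite /cst -(hSO y) mxE.
  by apply: eq_bigr => i _; rewrite mxE.
rewrite E in H; have := @derive_val _ _ _ _ _ _ _ H.
by rewrite derive_cst.
Qed.

Lemma alg_zero (Q0 : 'M[R]_3) (D : 'I_3 -> 'M[R]_3) :
  Q0 *m Q0^T = 1%:M ->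
  (forall k l m, \sum_(i < 3) (Q0 i l * D k i m + Q0 i m * D k i l) = 0) ->
  (forall k i m, D k i m = D m i k) ->
  forall k, D k = 0.
Proof.
move=> QQ orth sym.
pose P k l m := \sum_(i < 3) Q0 i l * D k i m.
have skew k l m : P k l m = - P k m l.
  by apply/eqP; rewrite -addr_eq0 /P -big_split /= orth.
have sy k l m : P k l m = P m l k.
  by apply: eq_bigr => i _; rewrite sym.
have P0 k l m : P k l m = 0.
  have := skew k l m; have := sy k m l; have := skew l m k.
  have := sy l k m; have := skew m k l; have := sy m l k.
  lra.
move=> k.
have T : Q0^T *m D k = 0.
  apply/matrixP => l m; rewrite !mxE -[RHS](P0 k l m).
  by apply: eq_bigr => i _; rewrite mxE.
by rewrite -[D k]mul1mx -QQ -mulmxA T mulmx0.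
Qed.

Lemma sum3 (F : 'I_3 -> R) : \sum_(k < 3) F k = F 0 + F 1 + F 2.
Proof.
rewrite !big_ord_recr big_ord0 /= add0r.
congr (F _ + F _ + F _); exact: val_inj.
Qed.

Lemma curlE (Q : 'rV[R]_3 -> 'M[R]_3) x i j :
  curl Q x i j = \sum_(k < 3) \sum_(l < 3) (eps j k l)%:~R * partial k (entry Q i l) x.
Proof. by rewrite /curl mxE. Qed.
Lemma curl_abs (F : 'I_3 -> 'I_3 -> R) :
  [/\ \sum_(k < 3) \sum_(l < 3) (eps 0 k l)%:~R * F k l = F 1 2 - F 2 1,
      \sum_(k < 3) \sum_(l < 3) (eps 1 k l)%:~R * F k l = F 2 0 - F 0 2 &
      \sum_(k < 3) \sum_(l < 3) (eps 2 k l)%:~R * F k l = F 0 1 - F 1 0].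
Proof.
rewrite !sum3 /eps /= !(mulr0z, mulr1z, mulrN1z).
by split; lra.
Qed.

Lemma curl_entries (Q : 'rV[R]_3 -> 'M[R]_3) x i :
  [/\ curl Q x i 0 = partial 1 (entry Q i 2) x - partial 2 (entry Q i 1) x,
      curl Q x i 1 = partial 2 (entry Q i 0) x - partial 0 (entry Q i 2) x &
      curl Q x i 2 = partial 0 (entry Q i 1) x - partial 1 (entry Q i 0) x].
Proof.
rewrite !curlE.
exact: (curl_abs (fun k l => partial k (entry Q i l) x)).
Qed.
End S.
Section S2.
Context {R : realType}.
Notation mu := (@lebesgue_measure R).

Lemma deriv_under (V DV : R -> R -> R) (L s : R) :
  (forall s y, is_derive s (1:R) (fun s => V s y) (DV s y)) ->
  continuous (fun p : R * R => DV p.1 p.2) ->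
  (forall s, continuous (V s)) ->
  is_derive s (1:R) (fun s => \int[mu]_(y in `[0, L]) V s y)
     (\int[mu]_(y in `[0, L]) DV s y).
Proof.
move=> dV cDV cV.
have [M [Mr HM]] : exists M, M \is Num.real /\ forall x, x > M ->
    forall p, (`[s - 1, s + 1] `*` `[0, L]) p -> `|DV p.1 p.2| <= x.
  have cK : compact ((fun p : R * R => DV p.1 p.2) @` (`[s - 1, s + 1] `*` `[0, L])).
    apply: continuous_compact; last by apply: compact_setX; exact: segment_compact.
    exact: continuous_subspaceT.
  have [M [Mr HM]] := compact_bounded cK.
  exists M; split => // x Mx p Kp; apply: (HM x Mx).
  by exists p.
pose G := fun _ : R => `|M| + 1.
have d1E : forall x y, partial1of2 V x y = DV x y.
  move=> x y; rewrite /partial1of2 derive1E.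
  exact: (@derive_val _ _ _ _ _ _ _ (dV x y)).
have Is : [set` `]s - 1, s + 1[] s by rewrite /= in_itv /=; apply/andP; split; lra.
have := @derivable_under_integral R _ _ mu V `[0, L] (measurable_itv _) s (s - 1) (s + 1) Is.
have intV : forall x, mu.-integrable `[0, L] (EFin \o V x).
  move=> x; apply: continuous_compact_integrable; first exact: segment_compact.
  exact: continuous_subspaceT.
have intG : mu.-integrable `[0, L] (EFin \o G).
  apply: continuous_compact_integrable; first exact: segment_compact.
  by apply: continuous_subspaceT => ?; exact: cvg_cst.
have bnd : forall x y, [set` `]s - 1, s + 1[] x -> [set` `[0, L]] y -> `|partial1of2 V x y| <= G y.
  move=> x y Ix Iy; rewrite d1E /G; apply: (HM (`|M| + 1) _ (x, y)).
    have := real_ler_norm Mr; lra.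
  split => /=; last exact: Iy.
  move: Ix; rewrite /= !in_itv /= => /andP[a b]; apply/andP; split; lra.
have der : forall x y, [set` `]s - 1, s + 1[] x -> [set` `[0, L]] y -> derivable (V^~ y) x 1.
  by move=> x y _ _; exact: (@ex_derive _ _ _ _ _ _ _ (dV x y)).
have G0 : forall y, 0 <= G y.
  move=> y; rewrite /G; have := normr_ge0 M; lra.
have Hd := @derivable_under_integral R _ _ mu V `[0, L] (measurable_itv _) s (s - 1) (s + 1) Is
   (fun x _ => intV x) der G G0 intG bnd.
have Hv := @differentiation_under_integral R _ _ mu V `[0, L] (measurable_itv _) s (s - 1) (s + 1) Is
   (fun x _ => intV x) der G G0 intG bnd.
have HH := derivableP Hd.
suff <- : 'D_1 (fun x' : R => \int[mu]_(y in `[0, L]) V x' y) s = \int[mu]_(y in `[0, L]) DV s y by [].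
rewrite -derive1E Hv; apply: eq_Rintegral => y _; exact: d1E.
Qed.

Lemma cont_of_is_derive (U DU : R -> R) :
  (forall y, is_derive y (1:R) U (DU y)) -> continuous U.
Proof.
move=> dU y; apply: differentiable_continuous; apply/derivable1_diffP.
exact: (@ex_derive _ _ _ _ _ _ _ (dU y)).
Qed.

Lemma ftc_U (U DU : R -> R) (L : R) : 0 < L ->
  (forall y, is_derive y (1:R) U (DU y)) -> continuous DU ->
  \int[mu]_(y in `[0, L]) DU y = U L - U 0.
Proof.
move=> L0 dU cDU.
have cU := cont_of_is_derive dU.
have H := @continuous_FTC2 R DU U 0 L L0.
rewrite /Rintegral H.
- by rewrite -EFinB.
- exact: continuous_subspaceT.
- split.
  + by move=> y _; exact: (@ex_derive _ _ _ _ _ _ _ (dU y)).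
  + exact/cvg_at_right_filter/cU.
  + exact/cvg_at_left_filter/cU.
- move=> y _; rewrite derive1E; exact: (@derive_val _ _ _ _ _ _ _ (dU y)).
Qed.

Lemma int_bound (f : R -> R) (L : R) : 0 < L -> continuous f ->
  (forall y, `|f y| <= 1) -> `|\int[mu]_(y in `[0, L]) f y| <= L.
Proof.
move=> L0 cf bf.
have intf : mu.-integrable `[0, L] (EFin \o f).
  apply: continuous_compact_integrable; first exact: segment_compact.
  exact: continuous_subspaceT.
apply: (le_trans (le_normr_Rintegral _ _)) => //.
have int1 : mu.-integrable `[0, L] (EFin \o (fun=> 1 : R)).
  apply: continuous_compact_integrable; first exact: segment_compact.
  by apply: continuous_subspaceT => ?; exact: cvg_cst.
have intn : mu.-integrable `[0, L] (EFin \o (fun y => `|f y|)).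
  apply: continuous_compact_integrable; first exact: segment_compact.
  apply: continuous_subspaceT => y; apply: continuous_comp; [exact: cf|exact: norm_continuous].
apply: (le_trans (le_Rintegral _ intn int1 _)) => //.
rewrite Rintegral_cst //.
have := lebesgue_measure_itv `[0, L]; rewrite /= => E.
rewrite E lte_fin L0 /= oppr0 addr0 mul1r.
done.
Qed.

Lemma bounded_const_curl (U V DU DV : R -> R -> R) (c : R) :
  (forall s y, is_derive s (1:R) (fun s => V s y) (DV s y)) ->
  (forall s y, is_derive y (1:R) (U s) (DU s y)) ->
  continuous (fun p : R * R => DV p.1 p.2) ->
  (forall s, continuous (DU s)) ->
  (forall s, continuous (V s)) ->
  (forall s y, `|U s y| <= 1) -> (forall s y, `|V s y| <= 1) ->
  (forall s y, DV s y - DU s y = c) -> c = 0.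
Proof.
move=> dV dU cDV cDU cV bU bV hc.
case: (eqVneq c 0) => // c0; exfalso.
have nc : 0 < `|c| by rewrite normr_gt0.
pose L := 4 / `|c|.
have L0 : 0 < L by rewrite /L divr_gt0.
have cL : c * L = 4 \/ c * L = -4.
  case: (ltrP 0 c) => hc0.
    by left; rewrite /L gtr0_norm // mulrCA divff // mulr1.
  by right; rewrite /L ler0_norm // invrN !mulrN mulrCA divff // mulr1.
pose H s := \int[mu]_(y in `[0, L]) V s y.
have dH : forall s, is_derive s (1:R) H (\int[mu]_(y in `[0, L]) DV s y).
  by move=> s; exact: deriv_under.
have HD : forall s, \int[mu]_(y in `[0, L]) DV s y = c * L + (U s L - U s 0).
  move=> s.
  have -> : \int[mu]_(y in `[0, L]) DV s y = \int[mu]_(y in `[0, L]) (c + DU s y).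
    by apply: eq_Rintegral => y _; have := hc s y; lra.
  rewrite RintegralD //.
  - rewrite Rintegral_cst // ftc_U //.
    have := lebesgue_measure_itv `[0, L]; rewrite /= => E.
    by rewrite E lte_fin L0 /= oppr0 addr0.
  - apply: continuous_compact_integrable; first exact: segment_compact.
    by apply: continuous_subspaceT => ?; exact: cvg_cst.
  - apply: continuous_compact_integrable; first exact: segment_compact.
    exact: continuous_subspaceT.
have cH : continuous H := cont_of_is_derive dH.
have L10 : 0 < L + 1 by lra.
have [xi _ Hxi] := MVT L10 (fun x _ => dH x) (continuous_subspaceT cH).
rewrite HD subr0 in Hxi.
have b1 := int_bound L0 (cV (L + 1)) (bV (L + 1)).
have b2 := int_bound L0 (cV 0) (bV 0).
have b3 := bU xi L. have b4 := bU xi 0.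
move: b1 b2 b3 b4; rewrite -/(H (L + 1)) -/(H 0) !ler_norml.
move=> /andP[b1 b1'] /andP[b2 b2'] /andP[b3 b3'] /andP[b4 b4'].
move: Hxi cL => Hxi [] E; rewrite E in Hxi.
  have h : 0 <= (L + 1) * (4 + (U xi L - U xi 0) - 2) by apply: mulr_ge0; lra.
  nra.
have h : 0 <= (L + 1) * (- (-4 + (U xi L - U xi 0)) - 2) by apply: mulr_ge0; lra.
nra.
Qed.

Lemma no_const_curl3 (u v : 'rV[R]_3 -> R) (k l : 'I_3) (c : R) :
  (forall x, differentiable u x) -> (forall x, differentiable v x) ->
  continuous (partial k v) -> continuous (partial l u) ->
  (forall x, `|u x| <= 1) -> (forall x, `|v x| <= 1) ->
  (forall x, partial k v x - partial l u x = c) -> c = 0.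
Proof.
move=> du dv ckv clu bu bv hc.
pose ek : 'rV[R]_3 := delta_mx 0 k.
pose el : 'rV[R]_3 := delta_mx 0 l.
apply: (@bounded_const_curl (fun s y => u (s *: ek + y *: el))
   (fun s y => v (s *: ek + y *: el))
   (fun s y => partial l u (s *: ek + y *: el))
   (fun s y => partial k v (s *: ek + y *: el))).
- move=> s y.
  have -> : (fun s => v (s *: ek + y *: el)) = (fun s => v (y *: el + s *: ek)).
    by apply/funext => s'; rewrite addrC.
  rewrite addrC.
  exact: (line_is_derive (diff_derivable (dv _))).
- move=> s y; exact: (line_is_derive (diff_derivable (du _))).
- move=> p; apply: continuous_comp; last exact: ckv.
  apply: continuousD; apply: continuousZr_tmp; [exact: cvg_fst | exact: cvg_snd].
- move=> s y; apply: continuous_comp; last exact: clu.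
  apply: continuousD; [exact: cvg_cst | apply: continuousZr_tmp; exact: cvg_id].
- move=> s y; apply: continuous_comp; last exact: differentiable_continuous.
  apply: continuousD; [exact: cvg_cst | apply: continuousZr_tmp; exact: cvg_id].
- by move=> s y.
- by move=> s y.
- by move=> s y.
Qed.
End S2.

Unset Implicit Arguments. Set Strict Implicit. Set Printing Implicit Defensive.
Local Close Scope classical_set_scope.
Local Open Scope ring_scope.
Lemma ord3_cases (P : 'I_3 -> Prop) : P 0 -> P 1 -> P 2 -> forall j, P j.
Proof.
move=> h0 h1 h2 [[|[|[|//]]] Hj].
- by rewrite (_ : Ordinal Hj = 0) //; apply: val_inj.
- by rewrite (_ : Ordinal Hj = 1) //; apply: val_inj.
- by rewrite (_ : Ordinal Hj = 2) //; apply: val_inj.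
Qed.

Lemma sym3 {R : realType} (F : 'I_3 -> 'I_3 -> R) :
  F 1 2 = F 2 1 -> F 2 0 = F 0 2 -> F 0 1 = F 1 0 -> forall k m, F k m = F m k.
Proof.
move=> a b c k m.
by elim/ord3_cases: k; elim/ord3_cases: m.
Qed.

Lemma entry_bound {R : realType} (M : 'M[R]_3) : M^T *m M = 1%:M ->
  forall i j, `|M i j| <= 1.
Proof.
move=> h i j.
have E' : \sum_(i0 < 3) M i0 j * M i0 j = 1.
  transitivity ((M^T *m M) j j); last by rewrite h mxE eqxx.
  rewrite mxE; apply: eq_bigr => i0 _; by rewrite mxE.
rewrite (bigD1 i) //= in E'.
have p : 0 <= \sum_(i0 < 3 | i0 != i) M i0 j * M i0 j.
  by apply: sumr_ge0 => i0 _; rewrite -expr2; exact: sqr_ge0.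
rewrite ler_norml; apply/andP; split; nra.
Qed.

Theorem theorem4p1 (R : realType) (Q : 'rV[R]_3 -> 'M[R]_3) (alpha : 'M[R]_3) :
  C1 Q ->
  (forall x, SO3 (Q x)) ->
  (forall x, curl Q x = alpha) ->
  alpha = 0 /\ (exists Q0 : 'M[R]_3, forall x, Q x = Q0).
Proof.
move=> hC hSO hcurl.
have hd : forall i j x, differentiable (entry Q i j) x by move=> i j; case: (hC i j).
have hc i j := proj2 (hC i j).
have hb : forall i j x, `|entry Q i j x| <= 1.
  by move=> i j x; apply: entry_bound; case: (hSO x).
have al0 : alpha = 0.
  apply/matrixP => i j; rewrite mxE.
  have ce x := curl_entries Q x i.
  elim/ord3_cases: j.
  - apply: (@no_const_curl3 R (entry Q i 1) (entry Q i 2) 1 2) => // x.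
    by case: (ce x) => <- _ _; rewrite hcurl.
  - apply: (@no_const_curl3 R (entry Q i 2) (entry Q i 0) 2 0) => // x.
    by case: (ce x) => _ <- _; rewrite hcurl.
  - apply: (@no_const_curl3 R (entry Q i 0) (entry Q i 1) 0 1) => // x.
    by case: (ce x) => _ _ <-; rewrite hcurl.
split => //.
have p0 : forall k i m x, partial k (entry Q i m) x = 0.
  move=> k i m x.
  pose D k := \matrix_(i < 3, m < 3) partial k (entry Q i m) x.
  have QQ : Q x *m (Q x)^T = 1%:M by apply: mulmx1C; case: (hSO x).
  have orth : forall k l m, \sum_(i < 3) (Q x i l * D k i m + Q x i m * D k i l) = 0.
    move=> k' l m'; have := orth_deriv hd (fun y => proj1 (hSO y)) k' x l m'; move=> E; rewrite -[RHS]E.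
    by apply: eq_bigr => i' _; rewrite !mxE.
  have sym : forall k i m, D k i m = D m i k.
    move=> k' i' m'; rewrite !mxE.
    have := curl_entries Q x i'; rewrite !hcurl al0 !mxE => -[e0 e1 e2].
    apply: (@sym3 R (fun k m => partial k (entry Q i' m) x)); lra.
  have := alg_zero QQ orth sym k.
  by move/matrixP => /(_ i m); rewrite !mxE.
exists (Q 0) => x; apply/matrixP => i m.
exact: (const_of_partials (hd i m) (fun k => p0 k i m) 0 x).
Qed.
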